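(* Let $\psi_f(G)$ denote the minimum weight of a fractional weak hyperclique-cover of a directed hypergraph $G$. Every directed hypergraph $G$ satisfies $\beta(G)\le\psi_f(G)$.
   Context: A directed hypergraph instance consists of vertices (messages) $V=[n]$ and receivers $j=1,\dots,m$, each given by a pair $(N(j),f(j))$ with $f(j)\in[n]$ and $N(j)\subseteq[n]\setminus\{f(j)\}$; it is the index coding problem in which a server holds $x_1,\dots,x_n\in\Sigma$ ($|\Sigma|>1$) and receiver $j$ wants $x_{f(j)}$ and knows $(x_i)_{i\in N(j)}$. A solution is an encoding $\mathcal{E}:\Sigma^n\to\Sigma_P$ such that each receiver $j$ can determine $x_{f(j)}$ from $\mathcal{E}(x_1,\dots,x_n)$ and its side information for all message values; $\beta_t(G)$ is the minimum of $\lceil\log_2|\Sigma_P|\rceil$ over solutions with $|\Sigma|=2^t$, and $\beta(G)=\inf_t\beta_t(G)/t$. A weak hyperclique is a set $\mathcal{J}$ of receivers such that for every pair of distinct $i,j\in\mathcal{J}$, $f(i)\in N(j)$. A fractional weak hyperclique-cover assigns a nonnegative weight to each weak hyperclique so that for every receiver $j$ the total weight of weak hypercliques containing $j$ is at least $1$; its weight is the sum of all weights. *)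

(* Defs.v *)
From HB Require Import structures.
From mathcomp Require Import all_boot all_order all_algebra.
From mathcomp Require Import boolp classical_sets reals.
Set Implicit Arguments. Unset Strict Implicit. Unset Printing Implicit Defensive.
Import Order.TTheory GRing.Theory Num.Theory.

(* A directed hypergraph instance on messages 'I_n with receivers 'I_m is given
   by f : 'I_m -> 'I_n (wanted message) and N : 'I_m -> {set 'I_n} (side info),
   with f j \notin N j (stated as hypothesis in the theorem).
   Alphabet Sigma = 'I_(2^t) (any set of size 2^t), message vectors are
   {ffun 'I_n -> 'I_(2^t)}, encodings take values in a finite set 'I_k. *)

Definition is_solution (n m t k : nat) (f : 'I_m -> 'I_n) (N : 'I_m -> {set 'I_n})
  (E : {ffun 'I_n -> 'I_(2 ^ t)} -> 'I_k) : Prop :=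
  forall (j : 'I_m) (x y : {ffun 'I_n -> 'I_(2 ^ t)}),
    E x = E y -> (forall i, i \in N j -> x i = y i) -> x (f j) = y (f j).

Definition beta_t_pred (n m : nat) (f : 'I_m -> 'I_n) (N : 'I_m -> {set 'I_n})
  (t : nat) : pred nat :=
  fun e => `[< exists k (E : {ffun 'I_n -> 'I_(2 ^ t)} -> 'I_k),
                 is_solution f N E /\ up_log 2 k = e >].

Lemma beta_t_ex (n m : nat) (f : 'I_m -> 'I_n) (N : 'I_m -> {set 'I_n}) (t : nat) :
  exists e, beta_t_pred f N t e.
Proof.
exists (up_log 2 #|{ffun 'I_n -> 'I_(2 ^ t)}|).
apply/asboolP.
exists #|{ffun 'I_n -> 'I_(2 ^ t)}|, (@enum_rank _).
split=> // j x y Exy _.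
by rewrite (enum_rank_inj Exy).
Qed.

Definition beta_t (n m : nat) (f : 'I_m -> 'I_n) (N : 'I_m -> {set 'I_n}) (t : nat) : nat :=
  ex_minn (beta_t_ex f N t).

Local Open Scope ring_scope.

Definition beta (R : realType) (n m : nat) (f : 'I_m -> 'I_n) (N : 'I_m -> {set 'I_n}) : R :=
  inf [set r : R | exists2 t : nat, (0 < t)%N & r = (beta_t f N t)%:R / t%:R].

Definition weak_hyperclique (n m : nat) (f : 'I_m -> 'I_n) (N : 'I_m -> {set 'I_n})
  (J : {set 'I_m}) : bool :=
  [forall i in J, forall j in J, (i != j) ==> (f i \in N j)].

Definition frac_whc_cover (R : realType) (n m : nat) (f : 'I_m -> 'I_n)
  (N : 'I_m -> {set 'I_n}) (w : {set 'I_m} -> R) : Prop :=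
  (forall J, weak_hyperclique f N J -> 0 <= w J) /\
  (forall j : 'I_m, 1 <= \sum_(J | weak_hyperclique f N J && (j \in J)) w J).

Definition cover_weight (R : realType) (n m : nat) (f : 'I_m -> 'I_n)
  (N : 'I_m -> {set 'I_n}) (w : {set 'I_m} -> R) : R :=
  \sum_(J | weak_hyperclique f N J) w J.

Definition psi_f (R : realType) (n m : nat) (f : 'I_m -> 'I_n) (N : 'I_m -> {set 'I_n}) : R :=
  inf [set s : R | exists w : {set 'I_m} -> R,
                     frac_whc_cover f N w /\ s = cover_weight f N w].

(* Main.v *)
Require Import Defs.
From HB Require Import structures.
From mathcomp Require Import all_boot all_order all_algebra.
From mathcomp Require Import boolp classical_sets reals.
Import Order.TTheory GRing.Theory Num.Theory.

Lemma card_copies (m M : nat) (a : {set 'I_m} -> nat) (P : pred {set 'I_m}) :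
  (forall J, a J <= M) ->
  #|[set c : {set 'I_m} * 'I_M | P c.1 && (c.2 < a c.1)]| = \sum_(J | P J) a J.
Proof.
move=> aM.
rewrite -sum1_card.
rewrite (eq_bigl (fun c : {set 'I_m} * 'I_M => P c.1 && (c.2 < a c.1))); last first.
  by move=> c; rewrite inE.
rewrite -(pair_big_dep P (fun J (r : 'I_M) => r < a J) (fun _ _ => 1)).
apply: eq_bigr => J _.
by rewrite (big_ord_narrow (aM J)) sum1_card card_ord.
Qed.

Lemma phi_ex t : exists phi : 'I_(2 ^ t) -> {ffun 'I_t -> bool}, injective phi.
Proof.
have e : #|{ffun 'I_t -> bool}| = 2 ^ t by rewrite card_ffun card_bool card_ord.
exists (fun v => enum_val (cast_ord (esym e) v)).
by move=> u v /enum_val_inj /cast_ord_inj.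
Qed.

Lemma code_bound (n m t : nat) (f : 'I_m -> 'I_n) (N : 'I_m -> {set 'I_n})
  (a : {set 'I_m} -> nat) :
  (forall j, t <= \sum_(J | weak_hyperclique f N J && (j \in J)) a J) ->
  beta_t f N t <= \sum_(J | weak_hyperclique f N J) a J.
Proof.
move=> ht.
pose M := \sum_(J : {set 'I_m}) a J.
have aM : forall J, a J <= M by move=> J; rewrite /M (bigD1 J) //= leq_addr.
pose C := ({set 'I_m} * 'I_M)%type.
pose hyp := weak_hyperclique f N.
pose Copies := [set c : C | hyp c.1 && (c.2 < a c.1)].
pose Sj (j : 'I_m) := [set c : C | (hyp c.1 && (j \in c.1)) && (c.2 < a c.1)].
have hS : forall j, t <= #|Sj j| by move=> j; rewrite /Sj (@card_copies _ _ _ (fun J => hyp J && (j \in J)) aM).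
have SC : forall j c, c \in Sj j -> c \in Copies.
  by move=> j c; rewrite !inE => /andP[/andP[-> _] ->].
pose inj (j : 'I_m) (b : 'I_t) : C := enum_val (widen_ord (hS j) b).
have injS : forall j b, inj j b \in Sj j by move=> j b; apply: enum_valP.
have inj_inj : forall j, injective (inj j).
  by move=> j b1 b2 /enum_val_inj /(congr1 val) /= /val_inj.
have [phi phi_inj] := phi_ex t.
pose bitidx (i : 'I_m) (c : C) : option 'I_t := [pick b | inj i b == c].
pose getbit (v : 'I_(2 ^ t)) (ob : option 'I_t) : bool :=
  if ob is Some b then phi v b else false.
pose D := {c : C | c \in Copies}.
pose g (x : {ffun 'I_n -> 'I_(2 ^ t)}) : {ffun D -> bool} :=
  [ffun d : D => \big[addb/false]_(i in (val d).1) getbit (x (f i)) (bitidx i (val d))].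
pose E x := enum_rank (g x).
have sol : is_solution f N E.
  move=> j x y /enum_rank_inj Exy agree.
  apply: phi_inj; apply/ffunP => b.
  have cS := injS j b.
  pose d : D := exist _ (inj j b) (SC _ _ cS).
  move/ffunP: Exy => /(_ d); rewrite !ffunE /=.
  have /andP[/andP[hc jc] _] : (hyp (inj j b).1 && (j \in (inj j b).1)) && ((inj j b).2 < a (inj j b).1) by have := cS; rewrite inE.
  rewrite (bigD1 j jc) [X in _ = X](bigD1 j jc) /=.
  have -> : bitidx j (inj j b) = Some b.
    rewrite /bitidx; case: pickP => [b' /eqP /inj_inj -> //|/(_ b)].
    by rewrite eqxx.
  rewrite /=.
  rewrite (eq_bigr (fun i => getbit (y (f i)) (bitidx i (inj j b)))).
    by move=> /addIb.
  move=> i /andP[iJ ij]; congr getbit; apply: agree.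
  by move/forallP: hc => /(_ i) /implyP /(_ iJ) /forallP /(_ j) /implyP /(_ jc) /implyP; apply.
rewrite /beta_t; case: ex_minnP => e _ emin.
apply: leq_trans (emin (up_log 2 #|{ffun D -> bool}|) _) _.
  by apply/asboolP; exists #|{ffun D -> bool}|, E.
apply: up_log_min => //.
by rewrite card_ffun card_bool card_sig -(@card_copies _ _ _ (hyp) aM) /Copies.
Qed.

Local Open Scope ring_scope.

Theorem lemma3p3 (R : realType) (n m : nat) (f : 'I_m -> 'I_n) (N : 'I_m -> {set 'I_n})
  (hfN : forall j : 'I_m, f j \notin N j) :
  beta R f N <= psi_f R f N.
Proof.
pose hyp := weak_hyperclique f N.
rewrite /psi_f; apply: lb_le_inf.
  pose w1 := fun J : {set 'I_m} => ((#|J| == 1)%N)%:R : R.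
  exists (cover_weight f N w1), w1; split => //; split.
    by move=> J _; rewrite /w1 ler0n.
  move=> j.
  have hj : weak_hyperclique f N [set j] && (j \in [set j]).
    rewrite set11 andbT; apply/forallP => i; apply/implyP => /set1P ->.
    by apply/forallP => k; apply/implyP => /set1P ->; rewrite eqxx.
  rewrite (bigD1 [set j] hj) /= /w1 cards1 eqxx lerDl.
  by apply: sumr_ge0 => J _; rewrite ler0n.
move=> s [w [[w0 wc] ->]].
apply/ler_addgt0Pr => e e0.
pose Kn := (\sum_(J | hyp J) 1)%N.
pose t := (Num.Def.trunc (Kn%:R / e)).+1.
have t0 : (0 : R) < t%:R by rewrite ltr0n.
pose a J := (Num.Def.trunc (t%:R * w J)).+1.
have ha : forall j, (t <= \sum_(J | weak_hyperclique f N J && (j \in J)) a J)%N.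
  move=> j; rewrite -(ler_nat R) natr_sum.
  apply: (@le_trans _ _ (t%:R * \sum_(J | weak_hyperclique f N J && (j \in J)) w J)).
    by rewrite ler_peMr // ltW.
  rewrite mulr_sumr; apply: ler_sum => J _.
  exact: ltW (truncnS_gt _).
have hb := @code_bound n m t f N a ha.
have lb : beta R f N <= (beta_t f N t)%:R / t%:R.
  apply: ge_inf; last by exists t.
  by exists 0 => r [t' _ ->]; rewrite divr_ge0 ?ler0n.
apply: le_trans lb _.
have hsum : ((\sum_(J | hyp J) a J)%N)%:R <= t%:R * cover_weight f N w + Kn%:R :> R.
  rewrite natr_sum /cover_weight mulr_sumr /Kn natr_sum -big_split /=.
  apply: ler_sum => J hJ.
  rewrite /a -addn1 natrD lerD2r truncn_le.
  by rewrite mulr_ge0 ?ler0n ?w0.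
apply: (@le_trans _ _ ((t%:R * cover_weight f N w + Kn%:R) / t%:R)).
  rewrite ler_pM2r ?invr_gt0 //.
  apply: le_trans hsum; by rewrite ler_nat.
rewrite mulrDl mulrAC divff ?mul1r ?gt_eqF // lerD2l.
rewrite ler_pdivrMr // mulrC; apply: ltW.
by rewrite -ltr_pdivrMr // truncnS_gt.
Qed.
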